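(* Let $I$ be a finite set and $T$ a tree on $I$. Let $a_1,\dots,a_k$ be atoms of the lattice $[\hat{0},T]$ whose vertices $v_1,\dots,v_k\in\mathcal{V}(T)$ are pairwise distinct. Then $\mathcal{V}(a_1\vee a_2\vee\dots\vee a_k)=\{v_1,\dots,v_k\}$, where the join is taken in $[\hat{0},T]$.
   Context: A tree on a finite set $I$ is a (non-planar) rooted binary tree whose leaves are bijectively labeled by $I$: vertices are inner vertices (valence $3$) and leaves and the root (valence $1$), edges oriented towards the root; one-leaf trees are allowed. A forest on $I$ is a set of trees whose leaf sets partition $I$; $\mathcal{V}(F)$ is its set of inner vertices. For forests $F,G$ on $I$, $F \leq G$ if there is a continuous map $F\to G$ which (D1) is increasing with respect to orientation towards the root, (D2) maps inner vertices to inner vertices injectively, (D3) is the identity of $I$ on leaves, (D4) is injective on each tree of $F$. This gives the poset $\operatorname{For}(I)$ with minimum $\hat{0}$ (no inner vertices); the interval $[\hat{0},T]$ is a lattice. For $F\le T$ the inner vertices of $F$ are regarded, via these maps, as a subset $\mathcal{V}(F)\subseteq\mathcal{V}(T)$. For distinct leaves $i,j$, $v_{(i,j)}$ is the inner vertex of $T$ where the paths from $i$ and $j$ down to the root meet. The atoms of $[\hat{0},T]$ are the forests with exactly one inner vertex; they correspond to unordered pairs $(i,j)$ of distinct elements of $I$ (one two-leaf tree on $\{i,j\}$, all other leaves isolated), and the vertex of the atom $(i,j)$ is $v_{(i,j)}$, i.e. $\mathcal{V}((i,j))=\{v_{(i,j)}\}$. *)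

(* Defs.v *)
From mathcomp Require Import all_boot.
Set Implicit Arguments. Unset Strict Implicit. Unset Printing Implicit Defensive.

Section Forests.
Variable I : finType.

(* Rooted binary trees with leaves labeled in I.  The planar presentation is
   harmless: nothing below depends on the order of the two children. *)
Inductive btree := Leaf of I | Node of btree & btree.

Fixpoint leaves (t : btree) : seq I :=
  match t with Leaf i => [:: i] | Node l r => leaves l ++ leaves r end.

Definition tree_on (t : btree) : Prop := perm_eq (leaves t) (enum I).

Definition forest := seq btree.
Definition forest_on (F : forest) : Prop :=
  perm_eq (flatten (map leaves F)) (enum I).

(* Vertices of a tree are addressed by the path (sequence of child choices)
   from the top inner vertex; ancestors are prefixes. *)
Fixpoint subtree (t : btree) (p : seq bool) : option btree :=
  match p with
  | [::] => Some t
  | b :: p' => match t with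
               | Leaf _ => None
               | Node l r => subtree (if b then r else l) p'
               end
  end.

(* Vertices of a forest: (index of the tree, path in that tree). *)
Definition fpos := (nat * seq bool)%type.

Definition fnode (F : forest) (x : fpos) : option btree :=
  obind (fun t => subtree t x.2) (onth F x.1).

Definition is_inner (F : forest) (x : fpos) : Prop :=
  if fnode F x is Some (Node _ _) then True else False.

Definition is_leaf (F : forest) (x : fpos) (i : I) : Prop :=
  if fnode F x is Some (Leaf j) then j = i else False.

(* A map F -> G satisfying (D1)-(D4), recorded on vertices: each edge of F
   (child -> parent) is sent to the increasing path of G between the images
   of its endpoints.
   - (D3) leaves go to the leaf with the same label;
   - (D2) inner vertices go injectively to inner vertices;
   - (D1)+(D4) the two children of an inner vertex x of F are sent strictly
     below the image of x, into the two different child subtrees of it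
     (this is exactly increasingness plus injectivity on each tree). *)
Definition forest_map (F G : forest) (phi : fpos -> fpos) : Prop :=
  [/\ (forall x i, is_leaf F x i -> is_leaf G (phi x) i),
      (forall x, is_inner F x -> is_inner G (phi x)),
      (forall x y, is_inner F x -> is_inner F y -> phi x = phi y -> x = y) &
      (forall x, is_inner F x ->
         exists c0 c1 r0 r1, c0 <> c1 /\
           phi (x.1, rcons x.2 false) = ((phi x).1, (phi x).2 ++ c0 :: r0) /\
           phi (x.1, rcons x.2 true)  = ((phi x).1, (phi x).2 ++ c1 :: r1))].

Definition forest_le (F G : forest) : Prop := exists phi, forest_map F G phi.

Definition tforest (T : btree) : forest := [:: T].

Fixpoint leaf_pos (t : btree) (i : I) : seq bool :=
  match t with
  | Leaf _ => [::]
  | Node l r => if i \in leaves l then false :: leaf_pos l i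
                else true :: leaf_pos r i
  end.

Fixpoint lcp (p q : seq bool) : seq bool :=
  match p, q with
  | b :: p', c :: q' => if b == c then b :: lcp p' q' else [::]
  | _, _ => [::]
  end.

(* v_(i,j): the vertex where the paths from i and j down to the root meet. *)
Definition vij (T : btree) (i j : I) : seq bool := lcp (leaf_pos T i) (leaf_pos T j).

Definition atom (i j : I) : forest :=
  Node (Leaf i) (Leaf j) :: [seq Leaf x | x <- enum I & (x != i) && (x != j)].

Definition is_join_below (T : btree) (k : nat) (a : 'I_k -> forest) (F : forest) : Prop :=
  [/\ forest_on F, forest_le F (tforest T), (forall m, forest_le (a m) F) &
      (forall G, forest_on G -> forest_le G (tforest T) ->
         (forall m, forest_le (a m) G) -> forest_le F G)].

End Forests.

(* Main.v *)
Require Import Defs.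
From mathcomp Require Import all_boot.
Set Implicit Arguments. Unset Strict Implicit. Unset Printing Implicit Defensive.

Section P.
Variable I : finType.
Implicit Types (t u T : btree I) (F G H : forest I) (i j : I) (p q : seq bool).

Lemma catK_l (T : Type) (p a b : seq T) : p ++ a = p ++ b -> a = b.
Proof. by elim: p => //= x p IH [] /IH. Qed.

Lemma cat_cons_inj (T : Type) (p a b : seq T) x y : p ++ x :: a = p ++ y :: b -> x = y.
Proof. by move/catK_l => [->]. Qed.

Lemma subtree_nil t : subtree t [::] = Some t.
Proof. by case: t. Qed.

Lemma subtree_cat t p q : subtree t (p ++ q) = obind (fun u => subtree u q) (subtree t p).
Proof. by elim: p t => [|b p IH] [i|l r] //=. Qed.

Lemma subtree_rcons_node t p b u : subtree t (rcons p b) = Some u ->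
  exists l r, subtree t p = Some (Node l r).
Proof.
rewrite -cats1 subtree_cat; case: (subtree t p) => [[i|l r]|] //=; eauto.
Qed.

Lemma subtree_leaves t p u : subtree t p = Some u -> {subset leaves u <= leaves t}.
Proof.
elim: p t => [|b p IH] [j|l r] //=.
- by case=> <-.
- by case=> <-.
- move=> /IH H x /H; rewrite mem_cat; case: b H => _ ->; rewrite ?orbT //.
Qed.

Lemma subtree_leaf_mem t p i : subtree t p = Some (Leaf i) -> i \in leaves t.
Proof. by move/subtree_leaves; apply; rewrite inE. Qed.

Lemma leaf_pos_spec t i : i \in leaves t -> subtree t (leaf_pos t i) = Some (Leaf i).
Proof.
elim: t => [j|l IHl r IHr] /=; first by rewrite inE => /eqP ->.
rewrite mem_cat; case: ifP => Hl /=; first by move=> _; apply: IHl.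
exact: IHr.
Qed.

Lemma leaf_pos_uniq t p i : uniq (leaves t) -> subtree t p = Some (Leaf i) ->
  p = leaf_pos t i.
Proof.
elim: p t => [|b p IH] [j|l r] //=.
rewrite cat_uniq => /and3P[ul dis ur]; case: b => H.
  have Hr := subtree_leaf_mem H.
  have Hl : i \notin leaves l.
    by apply: contra dis => Hil; apply/hasP; exists i.
  by rewrite (negbTE Hl) (IH _ ur H).
by rewrite (subtree_leaf_mem H) (IH _ ul H).
Qed.

Fixpoint first_leaf t : I := match t with Leaf i => i | Node l _ => first_leaf l end.

Lemma first_leafP t : exists r, subtree t r = Some (Leaf (first_leaf t)).
Proof. elim: t => [i|l [p Hp] r _]; first by exists [::]. by exists (false :: p). Qed.

Lemma lcp_cat p a b : lcp (p ++ a) (p ++ b) = p ++ lcp a b.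
Proof. by elim: p => //= c p ->; rewrite eqxx. Qed.

Lemma lcp_split p c a b : lcp (p ++ c :: a) (p ++ (~~ c) :: b) = p.
Proof. by rewrite lcp_cat /=; case: c; rewrite cats0. Qed.

Lemma lcp_same p c a b : lcp (p ++ c :: a) (p ++ c :: b) = p ++ c :: lcp a b.
Proof. by rewrite lcp_cat /= eqxx. Qed.

Lemma GLt t i j : i \in leaves t -> j \in leaves t -> i != j ->
  (exists a b, subtree t (lcp (leaf_pos t i) (leaf_pos t j)) = Some (Node a b)) /\
  exists c r r', leaf_pos t i = lcp (leaf_pos t i) (leaf_pos t j) ++ c :: r /\
                 leaf_pos t j = lcp (leaf_pos t i) (leaf_pos t j) ++ (~~ c) :: r'.
Proof.
elim: t => [k|l IHl r IHr] /=.
  by rewrite !inE => /eqP -> /eqP ->; rewrite eqxx.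
rewrite !mem_cat => Hi Hj ij.
case: (boolP (i \in leaves l)) => Hil; case: (boolP (j \in leaves l)) => Hjl /=.
- have [[a [b Hab]] [c [r1 [r2 [E1 E2]]]]] := IHl Hil Hjl ij.
  split; first by exists a, b.
  by exists c, r1, r2; rewrite -E1 -E2.
- split; first by exists l, r.
  by exists false, (leaf_pos l i), (leaf_pos r j).
- split; first by exists l, r.
  by exists true, (leaf_pos r i), (leaf_pos l j).
- have Hi' : i \in leaves r by move: Hi; rewrite (negbTE Hil).
  have Hj' : j \in leaves r by move: Hj; rewrite (negbTE Hjl).
  have [[a [b Hab]] [c [r1 [r2 [E1 E2]]]]] := IHr Hi' Hj' ij.
  split; first by exists a, b.
  by exists c, r1, r2; rewrite -E1 -E2.
Qed.

Lemma fnode_cat F n p q : fnode F (n, p ++ q) = obind (fun u => subtree u q) (fnode F (n, p)).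
Proof. by rewrite /fnode /=; case: onth => //= t; apply: subtree_cat. Qed.

Lemma is_innerP F x : is_inner F x <-> exists a b, fnode F x = Some (Node a b).
Proof.
rewrite /is_inner; case: fnode => [[i|a b]|]; split => //; try by case=> ? [? ?].
by eauto.
Qed.

Lemma is_leafP F x i : is_leaf F x i <-> fnode F x = Some (Leaf i).
Proof.
rewrite /is_leaf; case: fnode => [[k|a b]|]; split => //; try by move=> ->.
by case=> ->.
Qed.

Definition gidx F i := find (fun t => i \in leaves t) F.
Definition gtree F i := nth (Leaf i) F (gidx F i).
Definition gpos F i : fpos := (gidx F i, leaf_pos (gtree F i) i).
Definition glca F i j : fpos := (gidx F i, lcp (leaf_pos (gtree F i) i) (leaf_pos (gtree F j) j)).

Lemma glcaE F i j : glca F i j = ((gpos F i).1, lcp (gpos F i).2 (gpos F j).2).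
Proof. by []. Qed.

Lemma fo_uniq F : forest_on F -> uniq (flatten (map (@leaves I) F)).
Proof. by move/perm_uniq => ->; apply: enum_uniq. Qed.

Lemma fo_has F i : forest_on F -> has (fun t => i \in leaves t) F.
Proof.
move=> HF; have : i \in flatten (map (@leaves I) F) by rewrite (perm_mem HF) mem_enum.
elim: (F) => //= t F' IH; rewrite mem_cat => /orP[->|/IH ->] //; by rewrite orbT.
Qed.

Lemma gidx_lt F i : forest_on F -> gidx F i < size F.
Proof. by move/(fo_has i); rewrite has_find. Qed.

Lemma gtree_mem F i : forest_on F -> i \in leaves (gtree F i).
Proof. by move=> HF; exact: (nth_find (Leaf i) (fo_has i HF)). Qed.

Lemma onth_nth_lt (T : Type) (s : seq T) n x0 : n < size s -> onth s n = Some (nth x0 s n).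
Proof. by elim: s n => [|y s IH] [|n] //= /IH. Qed.

Lemma onth_lt (T : Type) (s : seq T) n x : onth s n = Some x -> n < size s /\ forall x0, nth x0 s n = x.
Proof. by elim: s n => [|y s IH] [|n] //=; [case=> -> | move/IH]. Qed.

Lemma gpos_leaf F i : forest_on F -> is_leaf F (gpos F i) i.
Proof.
move=> HF; apply/is_leafP; rewrite /fnode /= (onth_nth_lt (Leaf i) (gidx_lt i HF)) /=.
by apply: leaf_pos_spec; apply: gtree_mem.
Qed.

Lemma find_uniq_flat F n i d : uniq (flatten (map (@leaves I) F)) -> n < size F ->
  i \in leaves (nth d F n) -> gidx F i = n /\ uniq (leaves (nth d F n)).
Proof.
rewrite /gidx; elim: F n => [|t F IH] [|n] //=; rewrite cat_uniq => /and3P[ut dis uf].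
  by move=> _ ->.
move=> lt Hi; have Hf : i \in flatten (map (@leaves I) F).
  clear -lt Hi; elim: F n lt Hi => [|t' F IH] [|n] //= lt Hi; rewrite mem_cat ?Hi //.
  by rewrite (IH n) ?orbT.
have -> : (i \in leaves t) = false.
  by apply/negP => Hit; move/negP: dis; apply; apply/hasP; exists i.
by have [-> ->] := IH n uf lt Hi.
Qed.

Lemma leaf_uniq F x i : forest_on F -> is_leaf F x i -> x = gpos F i.
Proof.
move=> HF; case: x => n p /is_leafP; rewrite /fnode /=.
case E: (onth F n) => [t|] //= Hs.
have [lt Hn] := onth_lt E.
have Hi : i \in leaves (nth (Leaf i) F n) by rewrite Hn; apply: subtree_leaf_mem Hs.
have [Hg Hu] := find_uniq_flat (fo_uniq HF) lt Hi.
rewrite /gpos /gtree Hg Hn; congr pair; apply: leaf_pos_uniq Hs.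
by rewrite -(Hn (Leaf i)).
Qed.

Lemma GL F i j : forest_on F -> i != j -> gidx F i = gidx F j ->
  is_inner F (glca F i j) /\ exists c r r',
    gpos F i = ((glca F i j).1, (glca F i j).2 ++ c :: r) /\
    gpos F j = ((glca F i j).1, (glca F i j).2 ++ (~~ c) :: r').
Proof.
move=> HF ij gij.
have Ht : gtree F j = gtree F i.
  by rewrite /gtree gij; apply: set_nth_default; rewrite -gij; apply: gidx_lt.
have Hi := gtree_mem i HF; have Hj := gtree_mem j HF; rewrite Ht in Hj.
have [[a [b Hab]] [c [r1 [r2 [E1 E2]]]]] := GLt Hi Hj ij.
rewrite /glca Ht; split.
  apply/is_innerP; exists a, b; rewrite /fnode /= (onth_nth_lt (Leaf i) (gidx_lt i HF)) /=.
  exact: Hab.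
exists c, r1, r2; rewrite /gpos Ht -gij /=; split; congr pair => //.
Qed.

Lemma tree_forest T : tree_on T -> forest_on (tforest T).
Proof. by rewrite /forest_on /tforest /= cats0. Qed.

Lemma glca_T T i j : tree_on T -> glca (tforest T) i j = (0, vij T i j).
Proof.
move=> HT; have Hm : forall x, x \in leaves T by move=> x; rewrite (perm_mem HT) mem_enum.
by rewrite /glca /gidx /gtree /= !Hm.
Qed.


Lemma Ext F G psi n p r : forest_map F G psi -> fnode F (n, p ++ r) <> None ->
  exists r', psi (n, p ++ r) = ((psi (n, p)).1, (psi (n, p)).2 ++ r').
Proof.
case=> _ _ _ H4; elim/last_ind: r => [|r b IH] Hn.
  by exists [::]; rewrite !cats0; case: (psi (n, p)).
move: Hn; rewrite -rcons_cat -cats1 fnode_cat.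
case E: (fnode F (n, p ++ r)) => [[k|a c]|] //= _.
have [|r' IH'] := IH; first by rewrite E.
have [c0 [c1 [r0 [r1 [_ [E0 E1]]]]]] := H4 (n, p ++ r) ltac:(by rewrite /is_inner E).
rewrite cats1; case: b.
  by rewrite /= in E1; rewrite E1 IH' /=; exists (r' ++ c1 :: r1); rewrite catA.
by rewrite /= in E0; rewrite E0 IH' /=; exists (r' ++ c0 :: r0); rewrite catA.
Qed.

Lemma Desc F G psi x : forest_map F G psi -> is_inner F x ->
  exists d, forall b r, fnode F (x.1, x.2 ++ b :: r) <> None ->
   exists r', psi (x.1, x.2 ++ b :: r) = ((psi x).1, (psi x).2 ++ (if b then ~~ d else d) :: r').
Proof.
move=> Hm Hx; have [_ _ _ H4] := Hm.
have [c0 [c1 [r0 [r1 [c01 [E0 E1]]]]]] := H4 x Hx.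
exists c0 => b r Hn; rewrite -cat_rcons in Hn *.
have [r' E] := Ext Hm Hn; rewrite E.
have Ec1 : c1 = ~~ c0 by move: c01; case: (c0); case: (c1).
rewrite Ec1 in E1.
case: b {Hn E}; [rewrite E1 | rewrite E0] => /=; eexists; rewrite -catA //.
Qed.

Lemma Lp F H psi y i j c r r' : forest_on H -> forest_map F H psi -> is_inner F y ->
  is_leaf F (y.1, y.2 ++ c :: r) i -> is_leaf F (y.1, y.2 ++ (~~ c) :: r') j ->
  psi y = glca H i j.
Proof.
move=> HH Hm Hy Li Lj; have [d Hd] := Desc Hm Hy.
have Ni := iffLR (is_leafP _ _ _) Li; have Nj := iffLR (is_leafP _ _ _) Lj.
have [a Ea] := Hd c r ltac:(by rewrite Ni).
have [b Eb] := Hd (~~ c) r' ltac:(by rewrite Nj).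
have [H1 _ _ _] := Hm.
have Gi := leaf_uniq HH (H1 _ _ Li); have Gj := leaf_uniq HH (H1 _ _ Lj).
rewrite glcaE -Gi -Gj Ea Eb /=.
have -> : (if ~~ c then ~~ d else d) = ~~ (if c then ~~ d else d) by case: (c); rewrite /= ?negbK.
by rewrite lcp_split; case: (psi y).
Qed.

Lemma fnode_child F n p a b c r w : fnode F (n, p) = Some (Node a b) ->
  subtree (if c then b else a) r = Some w -> fnode F (n, p ++ c :: r) = Some w.
Proof. by move=> E Hs; rewrite fnode_cat E /=; case: c Hs. Qed.

Lemma U F G H chi phi0 phi x : forest_on H -> forest_map F G chi ->
  forest_map G H phi0 -> forest_map F H phi -> is_inner F x -> phi0 (chi x) = phi x.
Proof.
move=> HH mchi mphi0 mphi Hx.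
have [a [b E]] := iffLR (is_innerP F x) Hx.
case: x E Hx => n p E Hx.
have [ra Ha] := first_leafP a; have [rb Hb] := first_leafP b.
have La : is_leaf F (n, p ++ false :: ra) (first_leaf a).
  by apply/is_leafP; exact: (@fnode_child _ _ _ _ _ false _ _ E Ha).
have Lb : is_leaf F (n, p ++ (~~ false) :: rb) (first_leaf b).
  by apply/is_leafP; exact: (@fnode_child _ _ _ _ _ true _ _ E Hb).
rewrite (Lp HH mphi Hx La Lb).
have [d Hd] := Desc mchi Hx.
have Na := iffLR (is_leafP _ _ _) La; have Nb := iffLR (is_leafP _ _ _) Lb.
have [r1 E1] := Hd false ra ltac:(by rewrite Na).
have [r2 E2] := Hd true rb ltac:(by rewrite Nb).
have [C1 C2 _ _] := mchi.
have La' := C1 _ _ La; have Lb' := C1 _ _ Lb.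
rewrite /= E1 in La'; rewrite /= E2 in Lb'.
exact: (Lp HH mphi0 (C2 _ Hx) La' Lb').
Qed.


Lemma leafs_not_inner (s : seq I) n p :
  match obind (fun t => subtree t p) (onth (map (@Leaf I) s) n) with
  | Some (Node _ _) => True | _ => False end -> False.
Proof. by elim: s n => [|x s IH] [|m] //=; [case: (p) | exact: IH]. Qed.

Lemma atom_inner i j x : is_inner (atom i j) x -> x = (0, [::]).
Proof.
case: x => [[|n] p]; rewrite /is_inner /fnode /=.
- by case: p => [|b p] //; case: b; case: p.
- move: [seq x <- enum I | (x != i) && (x != j)] n => s.
  by move=> m Hm; exfalso; exact: leafs_not_inner Hm.
Qed.

Lemma atom_le F i j : forest_on F -> i != j -> gidx F i = gidx F j ->
  forest_le (atom i j) F.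
Proof.
move=> HF ij gij.
exists (fun x => if fnode (atom i j) x is Some (Leaf l) then gpos F l else glca F i j).
have [Hin [c [r [r' [Ei Ej]]]]] := GL HF ij gij.
split.
- by move=> x l /is_leafP ->; apply: gpos_leaf.
- by move=> x /atom_inner ->.
- by move=> x y /atom_inner -> /atom_inner ->.
- move=> x /atom_inner -> /=.
  exists c, (~~ c), r, r'; split; first by case: (c).
  by rewrite Ei Ej.
Qed.

Lemma atom_same G i j : forest_on G -> forest_le (atom i j) G -> gidx G i = gidx G j.
Proof.
move=> HG [al [H1 H2 H3 H4]].
have [c0 [c1 [r0 [r1 [_ [E0 E1]]]]]] := H4 (0, [::]) Logic.I.
have Li : is_leaf (atom i j) (0, [:: false]) i by [].
have Lj : is_leaf (atom i j) (0, [:: true]) j by [].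
have Gi := leaf_uniq HG (H1 _ _ Li); have Gj := leaf_uniq HG (H1 _ _ Lj).
rewrite /= in E0 E1.
by rewrite -[gidx G i]/((gpos G i).1) -[gidx G j]/((gpos G j).1) -Gi -Gj E0 E1.
Qed.


Section LemD.
Variables (F G H : forest I) (phi psi : fpos -> fpos).
Hypotheses (HF : forest_on F) (HG : forest_on G) (HH : forest_on H)
  (mphi : forest_map F H phi) (mpsi : forest_map G H psi)
  (Hyp : forall n p p' i j, is_leaf F (n, p) i -> is_leaf F (n, p') j ->
          gidx G i = gidx G j).

Definition chi (x : fpos) : fpos :=
  match fnode F x with
  | Some (Leaf l) => gpos G l
  | Some (Node a b) => glca G (first_leaf a) (first_leaf b)
  | None => x end.

Lemma K00 n p a b i j c r r' : fnode F (n, p) = Some (Node a b) ->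
  is_leaf F (n, p ++ c :: r) i -> is_leaf F (n, p ++ (~~ c) :: r') j ->
  i != j /\ gidx G i = gidx G j.
Proof.
move=> E Li Lj; split; last exact: Hyp Li Lj.
apply/eqP => eij; subst j.
have E1 := leaf_uniq HF Li; have E2 := leaf_uniq HF Lj.
rewrite -E2 in E1; have := cat_cons_inj (f_equal snd E1); by case: (c).
Qed.

Lemma K0 n p a b i j c r r' : fnode F (n, p) = Some (Node a b) ->
  is_leaf F (n, p ++ c :: r) i -> is_leaf F (n, p ++ (~~ c) :: r') j ->
  is_inner G (glca G i j) /\ psi (glca G i j) = phi (n, p).
Proof.
move=> E Li Lj; have [ij gij] := K00 E Li Lj.
have [Hin [e [s1 [s2 [Ei Ej]]]]] := GL HG ij gij.
have Li' : is_leaf G ((glca G i j).1, (glca G i j).2 ++ e :: s1) i.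
  by rewrite -Ei; apply: gpos_leaf.
have Lj' : is_leaf G ((glca G i j).1, (glca G i j).2 ++ (~~ e) :: s2) j.
  by rewrite -Ej; apply: gpos_leaf.
split => //; rewrite (Lp HH mpsi Hin Li' Lj').
have Hx : is_inner F (n, p) by rewrite /is_inner E.
by rewrite (Lp (y := (n, p)) HH mphi Hx Li Lj).
Qed.

Lemma chi_node n p a b : fnode F (n, p) = Some (Node a b) ->
  chi (n, p) = glca G (first_leaf a) (first_leaf b).
Proof. by rewrite /chi => ->. Qed.

Lemma fl_pos n p a b c : fnode F (n, p) = Some (Node a b) ->
  exists r, is_leaf F (n, p ++ c :: r) (first_leaf (if c then b else a)).
Proof.
move=> E; have [r Hr] := first_leafP (if c then b else a).
by exists r; apply/is_leafP; apply: fnode_child E _.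
Qed.

Lemma K n p a b i j c r r' : fnode F (n, p) = Some (Node a b) ->
  is_leaf F (n, p ++ c :: r) i -> is_leaf F (n, p ++ (~~ c) :: r') j ->
  glca G i j = chi (n, p).
Proof.
move=> E Li Lj; have [In1 E1] := K0 E Li Lj.
have [ra La] := fl_pos false E; have [rb Lb] := fl_pos true E.
have [In2 E2] := K0 (c := false) E La Lb.
rewrite (chi_node E); have [_ _ H3 _] := mpsi; apply: H3 => //.
by rewrite E1 E2.
Qed.

Lemma M n p a b : fnode F (n, p) = Some (Node a b) ->
  exists d, forall c r i, is_leaf F (n, p ++ c :: r) i ->
    exists r', gpos G i = ((chi (n, p)).1, (chi (n, p)).2 ++ (if c then ~~ d else d) :: r').
Proof.
move=> E.
have [ra La] := fl_pos false E; have [rb Lb] := fl_pos true E.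
have [ij gij] := K00 (c := false) E La Lb.
have [_ [e [s1 [s2 [Ei0 Ei1]]]]] := GL HG ij gij.
rewrite -(chi_node E) in Ei0 Ei1.
exists e => c r i Li; case: c Li => Li.
- have Kc := K (c := true) E Li La.
  have [ij' gij'] := K00 (c := true) E Li La.
  have [_ [f [t1 [t2 [Fi Fj]]]]] := GL HG ij' gij'.
  rewrite Kc in Fi Fj; rewrite Fj in Ei0; have ef := cat_cons_inj (f_equal snd Ei0).
  by exists t1; rewrite Fi -ef negbK.
- have Kc := K (c := false) E Li Lb.
  have [ij' gij'] := K00 (c := false) E Li Lb.
  have [_ [f [t1 [t2 [Fi Fj]]]]] := GL HG ij' gij'.
  rewrite Kc in Fi Fj; rewrite Fj in Ei1; have ef := cat_cons_inj (f_equal snd Ei1).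
  by exists t1; rewrite Fi; move: ef; case: (f); case: (e).
Qed.

Lemma D_map : forest_map F G chi.
Proof.
split.
- move=> x l /is_leafP E; rewrite /chi E; exact: gpos_leaf.
- move=> [n p] /is_innerP [a [b E]].
  have [ra La] := fl_pos false E; have [rb Lb] := fl_pos true E.
  have [In2 _] := K0 (c := false) E La Lb.
  by rewrite (chi_node E).
- move=> [n p] [n' p'] /is_innerP [a [b E]] /is_innerP [a' [b' E']] Ec.
  have [ra La] := fl_pos false E; have [rb Lb] := fl_pos true E.
  have [_ E2] := K0 (c := false) E La Lb.
  have [ra' La'] := fl_pos false E'; have [rb' Lb'] := fl_pos true E'.
  have [_ E2'] := K0 (c := false) E' La' Lb'.
  have [_ _ H3 _] := mphi; apply: H3; try by rewrite /is_inner ?E ?E'.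
  by rewrite -E2 -E2' -(chi_node E) -(chi_node E') Ec.
- move=> [n p] /is_innerP [a [b E]].
  have [d Hd] := M E.
  have Hc : forall c, exists r0, chi (n, rcons p c) =
      ((chi (n, p)).1, (chi (n, p)).2 ++ (if c then ~~ d else d) :: r0).
    move=> c.
    have Ec : fnode F (n, rcons p c) = Some (if c then b else a).
      by rewrite -cats1 fnode_cat E /= subtree_nil.
    case Ew: (if c then b else a) Ec => [l|a' b'] Ec.
    + have Ll : is_leaf F (n, p ++ c :: [::]) l by apply/is_leafP; rewrite cats1.
      by rewrite /chi Ec; apply: Hd Ll.
    + rewrite (chi_node Ec).
      have [ra' La'] := fl_pos false Ec; have [rb' Lb'] := fl_pos true Ec.
      rewrite cat_rcons in La'; rewrite cat_rcons in Lb'.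
      have [s1 E1] := Hd _ _ _ La'; have [s2 E2] := Hd _ _ _ Lb'.
      by rewrite glcaE E1 E2 /= lcp_same; eexists.
  have [r0 E0] := Hc false; have [r1 E1] := Hc true.
  exists d, (~~ d), r0, r1; split; first by case: (d).
  by rewrite E0 E1.
Qed.

Lemma D : forest_le F G.
Proof. exists chi; exact: D_map. Qed.

End LemD.


Fixpoint restr t (C : pred I) : option (btree I) :=
  match t with
  | Leaf i => if C i then Some (Leaf i) else None
  | Node l r =>
    match restr l C, restr r C with
    | Some a, Some b => Some (Node a b)
    | Some a, None => Some a
    | None, Some b => Some b
    | None, None => None
    end
  end.

Fixpoint rmap t (C : pred I) (p : seq bool) : seq bool :=
  match t with
  | Leaf _ => [::]
  | Node l r =>
    match restr l C, restr r C with
    | Some _, Some _ =>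
        match p with
        | [::] => [::]
        | b :: p' => if b then true :: rmap r C p' else false :: rmap l C p'
        end
    | Some _, None => false :: rmap l C p
    | None, Some _ => true :: rmap r C p
    | None, None => [::]
    end
  end.

Fixpoint sp t (C : pred I) : seq (seq bool) :=
  match t with
  | Leaf _ => [::]
  | Node l r =>
    (if has C (leaves l) && has C (leaves r) then [:: [::]] else [::]) ++
    map (cons false) (sp l C) ++ map (cons true) (sp r C)
  end.

Lemma restr_leaves t C : match restr t C with
  | Some u => leaves u = filter C (leaves t)
  | None => filter C (leaves t) = [::] end.
Proof.
elim: t => [i|l IHl r IHr] /=; first by case: (C i).
rewrite filter_cat; move: IHl IHr.
by case: (restr l C) => [a|]; case: (restr r C) => [b|] /= -> ->; rewrite ?cats0.
Qed.

Lemma leaves_nonnil t : leaves t != [::].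
Proof. by elim: t => [i|l IHl r IHr] //=; case: (leaves l) IHl. Qed.

Lemma restr_has t C u : restr t C = Some u -> has C (leaves t).
Proof.
move=> E; have := restr_leaves t C; rewrite E => Hl.
by rewrite has_filter -Hl leaves_nonnil.
Qed.

Lemma restr_some t C : has C (leaves t) -> exists u, restr t C = Some u.
Proof.
have := restr_leaves t C; case: (restr t C) => [u|]; first by eauto.
by rewrite has_filter => ->.
Qed.

Lemma rmap_leaf t C u p i : restr t C = Some u -> subtree u p = Some (Leaf i) ->
  subtree t (rmap t C p) = Some (Leaf i).
Proof.
elim: t u p => [k|l IHl r IHr] u p /=.
  by case: (C k) => // [[<-]]; case: p.
case El: (restr l C) => [a|]; case Er: (restr r C) => [b|] //=.
- case=> <-; case: p => [|[] p] //=; [exact: IHr | exact: IHl].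
- by case=> <- Hs; apply: IHl El Hs.
- by case=> <- Hs; apply: IHr Er Hs.
Qed.

Lemma rmap_node t C u p a b : restr t C = Some u -> subtree u p = Some (Node a b) ->
  rmap t C p \in sp t C.
Proof.
elim: t u p => [k|l IHl r IHr] u p /=.
  by case: (C k) => //; case=> <-; case: p.
have cons_inj : forall c : bool, injective (cons c) by move=> c x y H; case: H.

case El: (restr l C) => [a'|]; case Er: (restr r C) => [b'|] //=.
- case=> <-; case: p => [|[] p] /=.
  + by rewrite (restr_has El) (restr_has Er) /= inE eqxx.
  + by move=> Hs; rewrite !mem_cat (mem_map (cons_inj true)) (IHr _ _ Er Hs) !orbT.
  + by move=> Hs; rewrite !mem_cat (mem_map (cons_inj false)) (IHl _ _ El Hs) !orbT.
- by case=> <- Hs; rewrite !mem_cat (mem_map (cons_inj false)) (IHl _ _ El Hs) !orbT.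
- by case=> <- Hs; rewrite !mem_cat (mem_map (cons_inj true)) (IHr _ _ Er Hs) !orbT.
Qed.

Lemma rmap_inj t C u p p' : restr t C = Some u -> subtree u p <> None ->
  subtree u p' <> None -> rmap t C p = rmap t C p' -> p = p'.
Proof.
elim: t u p p' => [k|l IHl r IHr] u p p' /=.
  by case: (C k) => // [[<-]]; case: p => //; case: p'.
case El: (restr l C) => [a|]; case Er: (restr r C) => [b|] //=.
- case=> <-; case: p => [|c p]; case: p' => [|c' p'] //=; first by case: (c').
    by case: (c).
  by case: c; case: c' => //= H1 H2 [] E; rewrite (IHr _ _ _ Er H1 H2 E) || rewrite (IHl _ _ _ El H1 H2 E).
- by case=> <- H1 H2 [] E; rewrite (IHl _ _ _ El H1 H2 E).
- by case=> <- H1 H2 [] E; rewrite (IHr _ _ _ Er H1 H2 E).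
Qed.

Lemma rmap_child t C u p a b : restr t C = Some u -> subtree u p = Some (Node a b) ->
  exists c r0 r1, rmap t C (rcons p false) = rmap t C p ++ c :: r0 /\
                  rmap t C (rcons p true) = rmap t C p ++ (~~ c) :: r1.
Proof.
elim: t u p => [k|l IHl r IHr] u p /=.
  by case: (C k) => // [[<-]]; case: p.
case El: (restr l C) => [a'|]; case Er: (restr r C) => [b'|] //=.
- case=> <-; case: p => [|[] p] /=.
  + by move=> _; exists false, (rmap l C [::]), (rmap r C [::]).
  + move=> Hs; have [c [r0 [r1 [E0 E1]]]] := IHr _ _ Er Hs.
    by exists c, r0, r1; rewrite E0 E1.
  + move=> Hs; have [c [r0 [r1 [E0 E1]]]] := IHl _ _ El Hs.
    by exists c, r0, r1; rewrite E0 E1.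
- case=> <- Hs; have [c [r0 [r1 [E0 E1]]]] := IHl _ _ El Hs.
  by exists c, r0, r1; rewrite E0 E1.
- case=> <- Hs; have [c [r0 [r1 [E0 E1]]]] := IHr _ _ Er Hs.
  by exists c, r0, r1; rewrite E0 E1.
Qed.

Lemma sp_node t C q : q \in sp t C -> exists a b, subtree t q = Some (Node a b).
Proof.
elim: t q => [k|l IHl r IHr] q //=.
rewrite !mem_cat => /or3P[| /mapP[q' Hq' ->] | /mapP[q' Hq' ->]] /=.
- by case: ifP => //; rewrite inE => _ /eqP ->; exists l, r.
- exact: IHl.
- exact: IHr.
Qed.

Lemma sp_uniq t C : uniq (sp t C).
Proof.
have cons_inj : forall c : bool, injective (cons c) by move=> c x y H; case: H.
elim: t => [k|l IHl r IHr] //=.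
rewrite cat_uniq; apply/and3P; split.
- by case: ifP.
- apply/hasPn => x; rewrite mem_cat => /orP[]/mapP[y _ ->];
    by case: ifP => _; rewrite ?inE.
- rewrite cat_uniq !map_inj_uniq // IHl IHr /= andbT.
  by apply/hasPn => x /mapP[y _ ->]; apply/negP => /mapP[z _].
Qed.

Lemma sp_size t C : size (sp t C) = (count C (leaves t)).-1.
Proof.
elim: t => [k|l IHl r IHr] /=; first by case: (C k).
rewrite !size_cat !size_map IHl IHr count_cat !has_count.
case: (count C (leaves l)) => [|x]; case: (count C (leaves r)) => [|y] //=.
by rewrite addnS.
Qed.

Lemma sp_mono t (C D : pred I) : (forall x, C x -> D x) -> {subset sp t C <= sp t D}.
Proof.
move=> CD; elim: t => [k|l IHl r IHr] //= q.
rewrite !mem_cat => /or3P[| /mapP[q' Hq' ->] | /mapP[q' Hq' ->]].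
- case: ifP => // /andP[H1 H2] Hq.
  by rewrite (sub_has CD H1) (sub_has CD H2) Hq.
- by rewrite map_f ?orbT // IHl.
- by rewrite map_f ?orbT // IHr.
Qed.

Lemma sp_ext t (C D : pred I) : C =1 D -> sp t C = sp t D.
Proof.
move=> CD; elim: t => [k|l IHl r IHr] //=.
by rewrite IHl IHr !(eq_has CD).
Qed.

Lemma sp_lca t (C : pred I) i j : C i -> C j -> i != j -> i \in leaves t ->
  j \in leaves t -> lcp (leaf_pos t i) (leaf_pos t j) \in sp t C.
Proof.
move=> Ci Cj ij; elim: t => [k|l IHl r IHr] /=.
  by rewrite !inE => /eqP Ei /eqP Ej; move: ij; rewrite Ei Ej eqxx.
rewrite !mem_cat => Hi Hj.
have hl : forall x, C x -> x \in leaves l -> has C (leaves l).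
  by move=> x Cx Hx; apply/hasP; exists x.
have hr : forall x, C x -> x \in leaves r -> has C (leaves r).
  by move=> x Cx Hx; apply/hasP; exists x.
case: (boolP (i \in leaves l)) => Hil; case: (boolP (j \in leaves l)) => Hjl /=.
- by rewrite map_f ?orbT // IHl.
- have Hjr : j \in leaves r by move: Hj; rewrite (negbTE Hjl).
  by rewrite (hl i) // (hr j) // inE eqxx.
- have Hir : i \in leaves r by move: Hi; rewrite (negbTE Hil).
  by rewrite (hl j) // (hr i) // inE eqxx.
- have Hir : i \in leaves r by move: Hi; rewrite (negbTE Hil).
  have Hjr : j \in leaves r by move: Hj; rewrite (negbTE Hjl).
  by rewrite map_f ?orbT // IHr.
Qed.


Definition vv T (p : I * I) := vij T p.1 p.2.
Definition blk (lab : I -> I) x : pred I := fun y => lab y == lab x.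

Definition Inv T (lab : I -> I) (s : seq (I * I)) : Prop :=
  [/\ forall e : I * I, e \in s -> lab e.1 = lab e.2,
      forall x, {subset sp T (blk lab x) <= map (vv T) s},
      forall x y q, q \in sp T (blk lab x) -> q \in sp T (blk lab y) -> lab x = lab y &
      forall f : I -> nat, (forall e : I * I, e \in s -> f e.1 = f e.2) ->
        forall x y, lab x = lab y -> f x = f y].

Lemma tree_mem T x : tree_on T -> x \in leaves T.
Proof. by move=> HT; rewrite (perm_mem HT) mem_enum. Qed.

Lemma tree_uniq T : tree_on T -> uniq (leaves T).
Proof. by move/perm_uniq => ->; apply: enum_uniq. Qed.

Lemma build T s : tree_on T -> uniq (map (vv T) s) ->
  (forall e : I * I, e \in s -> e.1 != e.2) -> exists lab, Inv T lab s.
Proof.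
move=> HT; have Hm := tree_mem _ HT.
elim: s => [|e s IH].
  move=> _ _; exists id.
  have Hnil : forall x, sp T (blk id x) = [::].
    move=> x; apply: size0nil; rewrite sp_size.
    have : count (blk id x) (leaves T) <= 1.
      by rewrite (@eq_count _ _ (pred1 x)) // count_uniq_mem ?leq_b1 // tree_uniq.
    by case: count => [|[]].
  split => //.
  - by move=> x q; rewrite Hnil.
  - by move=> x y q; rewrite Hnil.
  - by move=> f _ x y ->.
rewrite map_cons cons_uniq => /andP[vpn us] hd.
have [lab [I1 I2 I3 I4]] := IH us (fun (e0 : I * I) He => hd e0 (@mem_behead _ (e :: s) _ He)).
case: e hd vpn => i j hd vpn.
have ij : i != j := hd (i, j) (mem_head _ _).

case: (eqVneq (lab i) (lab j)) => Hl.
  exfalso; move/negP: vpn; apply; apply: (I2 i).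
  by apply: sp_lca; rewrite ?Hm //= /blk ?Hl eqxx.
pose lab' := fun y => if lab y == lab j then lab i else lab y.
pose AB : pred I := fun y => (lab y == lab i) || (lab y == lab j).
pose w := vij T i j.
have Sab : sp T AB =i sp T (blk lab i) ++ sp T (blk lab j) ++ [:: w].
  have u1 : uniq (sp T (blk lab i) ++ sp T (blk lab j) ++ [:: w]).
    rewrite cat_uniq sp_uniq cat_uniq sp_uniq /= andbT !orbF.
    have wA : w \notin sp T (blk lab i).
      by apply/negP => /(I2 i) H; move/negP: vpn; apply.
    have wB : w \notin sp T (blk lab j).
      by apply/negP => /(I2 j) H; move/negP: vpn; apply.
    rewrite wB /= andbT; apply/hasPn => q; rewrite mem_cat inE => /orP[Hq|/eqP ->] //.
    by apply/negP => Hq'; move: (I3 _ _ _ Hq' Hq); apply/eqP.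
  have sub : {subset sp T (blk lab i) ++ sp T (blk lab j) ++ [:: w] <= sp T AB}.
    move=> q; rewrite !mem_cat inE => /or3P[Hq|Hq|/eqP ->].
    - by apply: sp_mono Hq => y; rewrite /AB /blk => ->.
    - by apply: sp_mono Hq => y; rewrite /AB /blk => ->; rewrite orbT.
    - by apply: sp_lca; rewrite ?Hm // /AB eqxx ?orbT.
  have Hc : count AB (leaves T) =
            count (blk lab i) (leaves T) + count (blk lab j) (leaves T).
    rewrite -count_predUI (@eq_count _ (predI _ _) pred0) ?count_pred0 ?addn0 //.
    move=> y /=; rewrite /blk; case: eqP => // ->; exact: negbTE.
  have cA : 0 < count (blk lab i) (leaves T) by rewrite -has_count; apply/hasP; exists i; rewrite ?Hm // /blk.
  have cB : 0 < count (blk lab j) (leaves T) by rewrite -has_count; apply/hasP; exists j; rewrite ?Hm // /blk.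
  have sz : size (sp T AB) <= size (sp T (blk lab i) ++ sp T (blk lab j) ++ [:: w]).
    rewrite !size_cat !sp_size Hc /=.
    by move: (count (blk lab i) _) (count (blk lab j) _) cA cB => [|a] [|b] //= _ _; rewrite addn1.
  have [_ E] := uniq_min_size u1 sub sz.
  by move=> q; rewrite E.
have lab'AB : forall x, AB x -> lab' x = lab i.
  by move=> x; rewrite /AB /lab' => /orP[/eqP ->|->]; rewrite ?(negbTE Hl).
have lab'O : forall x, ~~ AB x -> lab' x = lab x.
  by move=> x; rewrite /AB /lab' negb_or => /andP[_ /negbTE ->].
have blkAB : forall x, AB x -> blk lab' x =1 AB.
  move=> x Hx y; rewrite /blk (lab'AB x Hx) /lab' /AB.
  by case: (eqVneq (lab y) (lab j)) => [->|Hne]; rewrite ?eqxx ?orbT ?(negbTE Hne) ?orbF.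
have blkO : forall x, ~~ AB x -> blk lab' x =1 blk lab x.
  move=> x Hx y; rewrite /blk (lab'O x Hx) /lab'.
  move: Hx; rewrite /AB negb_or => /andP[Hxi Hxj].
  case: (eqVneq (lab y) (lab j)) => [->|Hne]; last by [].
  by rewrite [lab i == _]eq_sym [lab j == _]eq_sym (negbTE Hxi) (negbTE Hxj).
exists lab'; split.
- move=> q; rewrite inE => /orP[/eqP -> | Hq] /=.
    by rewrite /lab' eqxx (negbTE Hl).
  by rewrite /lab' (I1 q Hq).
- move=> x q; case: (boolP (AB x)) => Hx.
    rewrite (sp_ext _ (blkAB x Hx)) Sab !mem_cat inE => /or3P[/(I2 i)|/(I2 j)|/eqP ->] /=.
    + by move=> H; rewrite inE H orbT.
    + by move=> H; rewrite inE H orbT.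
    + by rewrite inE eqxx.
  by rewrite (sp_ext _ (blkO x Hx)) => /(I2 x) H; rewrite inE H orbT.
- move=> x y q.
  have key : forall z, ~~ AB z -> q \in sp T AB -> q \in sp T (blk lab z) -> False.
    move=> z Hz; rewrite Sab !mem_cat inE => /or3P[H|H|/eqP ->] Hq.
    + have := I3 _ _ _ H Hq; move: Hz; rewrite /AB => /norP[/eqP Hz _] E; exact: Hz.
    + have := I3 _ _ _ H Hq; move: Hz; rewrite /AB => /norP[_ /eqP Hz] E; exact: Hz.
    + by move/negP: vpn; apply; apply: (I2 z).
  case: (boolP (AB x)) => Hx; case: (boolP (AB y)) => Hy.
  + by rewrite !lab'AB.
  + rewrite (sp_ext _ (blkAB x Hx)) (sp_ext _ (blkO y Hy)) => H1 H2.
    by case: (key y Hy H1 H2).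
  + rewrite (sp_ext _ (blkAB y Hy)) (sp_ext _ (blkO x Hx)) => H1 H2.
    by case: (key x Hx H2 H1).
  + rewrite (sp_ext _ (blkO x Hx)) (sp_ext _ (blkO y Hy)) => H1 H2.
    by rewrite !lab'O // (I3 _ _ _ H1 H2).
- move=> f Hf.
  have Hf' : forall e : I * I, e \in s -> f e.1 = f e.2 by move=> e He; apply: Hf; rewrite inE He orbT.
  have Hij : f i = f j := Hf (i, j) (mem_head _ _).
  move=> x y; rewrite /lab'; case: ifP => /eqP Hx; case: ifP => /eqP Hy E.
  + by apply: (I4 f Hf'); rewrite Hx Hy.
  + by rewrite (I4 f Hf' x j Hx) -Hij (I4 f Hf' i y E).
  + by rewrite (I4 f Hf' x i E) Hij (I4 f Hf' j y (esym Hy)).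
  + exact: (I4 f Hf').
Qed.


Lemma sumn_add (R : seq I) (f g : I -> nat) :
  sumn [seq f r + g r | r <- R] = sumn (map f R) + sumn (map g R).
Proof. by elim: R => //= r R ->; rewrite addnACA. Qed.

Lemma sumn_single (R : seq I) r0 c : uniq R ->
  sumn [seq (if r0 == r then c else 0) | r <- R] = (r0 \in R) * c.
Proof.
elim: R => //= r R IH /andP[rR uR]; rewrite IH // inE.
case: (eqVneq r0 r) => [->|] /=; last by [].
by rewrite (negbTE rR) mul0n addn0 mul1n.
Qed.

Section F0.
Variables (T : btree I) (lab : I -> I) (s : seq (I * I)).
Hypotheses (HT : tree_on T) (Hinv : Inv T lab s).

Definition RR := undup (map lab (enum I)).
Definition gtr r := odflt (Leaf r) (restr T (fun y => lab y == r)).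
Definition F0 := map gtr RR.
Definition x0 := first_leaf T.
Definition phi0 (x : fpos) : fpos := (0, rmap T (fun y => lab y == nth x0 RR x.1) x.2).

Lemma RR_mem r : r \in RR -> exists z, r = lab z.
Proof. by rewrite mem_undup => /mapP[z _ ->]; exists z. Qed.

Lemma lab_in z : lab z \in RR.
Proof. by rewrite mem_undup map_f ?mem_enum. Qed.

Lemma gtr_some r : r \in RR -> restr T (fun y => lab y == r) = Some (gtr r).
Proof.
move=> /RR_mem [z ->].
have [u Hu] : exists u, restr T (fun y => lab y == lab z) = Some u.
  by apply: restr_some; apply/hasP; exists z; rewrite ?tree_mem.
by rewrite /gtr Hu.
Qed.

Lemma leaves_gtr r : r \in RR -> leaves (gtr r) = filter (fun y => lab y == r) (leaves T).
Proof.
move=> /gtr_some E; have := restr_leaves T (fun y => lab y == r).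
by rewrite E.
Qed.

Lemma fnodeF0 n p w : fnode F0 (n, p) = Some w ->
  n < size RR /\ exists u, restr T (fun y => lab y == nth x0 RR n) = Some u /\
                          subtree u p = Some w.
Proof.
rewrite /fnode /=; case E: (onth F0 n) => [t|] //= Hs.
have [lt Hn] := onth_lt E; rewrite size_map in lt; split => //.
have Et : t = gtr (nth x0 RR n) by rewrite -(Hn (gtr x0)) (nth_map x0).
exists t; split => //; rewrite Et; apply: gtr_some; exact: mem_nth.
Qed.

Lemma flat_perm (L : seq I) :
  perm_eq (flatten [seq filter (fun y => lab y == r) L | r <- RR]) L.
Proof.
apply/permP => a; rewrite count_flatten -map_comp.
elim: L => [|x L IH] /=; first by elim: RR.
have -> : [seq (count a \o (fun r => filter (fun y => lab y == r) (x :: L))) r | r <- RR] =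
          [seq (if lab x == r then (a x : nat) else 0) + count a (filter (fun y => lab y == r) L) | r <- RR].
  by apply: eq_map => r /=; case: ifP.
by rewrite sumn_add sumn_single ?undup_uniq // lab_in mul1n IH.
Qed.

Lemma F0_on : forest_on F0.
Proof.
rewrite /forest_on /F0 -map_comp.
rewrite (_ : map _ RR = map (fun r => filter (fun y => lab y == r) (leaves T)) RR); last first.
  by apply/eq_in_map => r Hr /=; rewrite leaves_gtr.
exact: perm_trans (flat_perm _) HT.
Qed.

Lemma F0_map : forest_map F0 (tforest T) phi0.
Proof.
have [I1 I2 I3 I4] := Hinv.
split.
- move=> [n p] i /is_leafP /fnodeF0 [_ [u [Eu Hs]]].
  by apply/is_leafP; rewrite /fnode /=; apply: rmap_leaf Eu Hs.
- move=> [n p] /is_innerP [a [b /fnodeF0 [_ [u [Eu Hs]]]]].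
  have := rmap_node Eu Hs => /sp_node [a' [b' E]].
  by apply/is_innerP; exists a', b'; rewrite /fnode /=.
- move=> [n p] [n' p'] /is_innerP [a [b /fnodeF0 [lt [u [Eu Hs]]]]].
  move=> /is_innerP [a' [b' /fnodeF0 [lt' [u' [Eu' Hs']]]]] /= [] E.
  have M1 := rmap_node Eu Hs; have M2 := rmap_node Eu' Hs'.
  have [z Ez] := RR_mem (mem_nth x0 lt); have [z' Ez'] := RR_mem (mem_nth x0 lt').
  rewrite -E in M2; move: M1 M2; move: (rmap _ _ p) => q M1 M2.
  rewrite Ez' in M2; rewrite Ez in M1.
  have Ezz := I3 z z' _ M1 M2.
  have Enn : n = n'.
    by apply/eqP; rewrite -(nth_uniq x0 lt lt' (undup_uniq _)) Ez Ez' Ezz.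
  subst n'; congr pair; rewrite Eu' in Eu; case: Eu => Eu; subst u'.
  by apply: rmap_inj Eu' _ _ E; rewrite ?Hs ?Hs'.
- move=> [n p] /is_innerP [a [b /fnodeF0 [_ [u [Eu Hs]]]]].
  have [c [r0 [r1 [E0 E1]]]] := rmap_child Eu Hs.
  exists c, (~~ c), r0, r1; split; first by case: (c).
  by rewrite /phi0 /= E0 E1.
Qed.

Lemma F0_img x : is_inner F0 x -> (phi0 x).2 \in map (vv T) s.
Proof.
have [I1 I2 I3 I4] := Hinv.
case: x => n p /is_innerP [a [b /fnodeF0 [lt [u [Eu Hs]]]]].
have M1 := rmap_node Eu Hs; have [z Ez] := RR_mem (mem_nth x0 lt).
rewrite Ez in M1; rewrite /phi0 /= Ez; exact: I2 z _ M1.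
Qed.

Lemma F0_gidx i : gidx F0 i = find (fun r => lab i == r) RR.
Proof.
rewrite /gidx /F0 find_map; apply: eq_in_find => r Hr /=.
by rewrite leaves_gtr // mem_filter tree_mem // andbT.
Qed.

Lemma F0_leaf_lab n p i : is_leaf F0 (n, p) i -> lab i = nth x0 RR n.
Proof.
move=> /is_leafP /fnodeF0 [_ [u [Eu Hs]]].
have := restr_leaves T (fun y => lab y == nth x0 RR n); rewrite Eu => El.
have := subtree_leaf_mem Hs; rewrite El mem_filter => /andP[/eqP -> _] //.
Qed.

End F0.

End P.

Unset Implicit Arguments.
Theorem proposition5p3 (I : finType) (T : btree I) (k : nat)
    (pr : 'I_k -> (I * I)%type) :
  tree_on T ->
  (forall m, (pr m).1 != (pr m).2) ->
  injective (fun m => vij T (pr m).1 (pr m).2) ->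
  (exists F, is_join_below T (fun m => atom (pr m).1 (pr m).2) F) /\
  (forall F, is_join_below T (fun m => atom (pr m).1 (pr m).2) F ->
   forall phi, forest_map F (tforest T) phi ->
   forall q : seq bool,
     (exists x, is_inner F x /\ phi x = (0%N, q)) <->
     (exists m, q = vij T (pr m).1 (pr m).2)).
Proof.
move=> HT Hd Hinj.
pose s := map pr (enum 'I_k).
have us : uniq (map (vv T) s).
  by rewrite /s -map_comp map_inj_uniq ?enum_uniq //.
have hd : forall e : I * I, e \in s -> e.1 != e.2.
  by move=> e /mapP [m _ ->]; apply: Hd.
have [lab Hinv] := build HT us hd.
have [I1 I2 I3 I4] := Hinv.
have HT' := tree_forest HT.
have memS : forall m, pr m \in s by move=> m; rewrite map_f ?mem_enum.
have Hon := F0_on lab HT.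
have Hmap := F0_map HT Hinv.
have Hat : forall m, forest_le (atom (pr m).1 (pr m).2) (F0 T lab).
  move=> m; apply: atom_le Hon (Hd m) _.
  by rewrite !F0_gidx // (I1 _ (memS m)).
have Hjoin : is_join_below T (fun m => atom (pr m).1 (pr m).2) (F0 T lab).
  split => //; first by exists (phi0 T lab).
  move=> G HG [psi mpsi] HatG.
  apply: (D Hon HG HT' Hmap mpsi) => n p p' i j Li Lj.
  apply: (I4 (gidx G)); last by rewrite (F0_leaf_lab HT Li) (F0_leaf_lab HT Lj).
  by move=> e /mapP [m _ ->]; apply: atom_same HG (HatG m).
split; first by exists (F0 T lab).
move=> F [HFo HFle HFat HFmin] phi mphi q; split.
- move=> [x [Hx Ex]].
  have [chi1 mchi] := HFmin _ Hon (ex_intro _ _ Hmap) Hat.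
  have E := U HT' mchi Hmap mphi Hx.
  have [_ C2 _ _] := mchi.
  have := F0_img HT Hinv (C2 _ Hx); rewrite E Ex /= => /mapP [e /mapP [m _ ->] ->].
  by exists m.
- move=> [m ->].
  have [al [A1 A2 A3 A4]] := HFat m.
  have Hr : is_inner (atom (pr m).1 (pr m).2) (0, [::]) by [].
  have [c0 [c1 [r0 [r1 [c01 [E0 E1]]]]]] := A4 _ Hr.
  have Ec1 : c1 = ~~ c0 by move: c01; case: (c0); case: (c1).
  rewrite Ec1 in E1.
  have Li := A1 (0, [:: false]) (pr m).1 (erefl _).
  have Lj := A1 (0, [:: true]) (pr m).2 (erefl _).
  rewrite /= E0 in Li; rewrite /= E1 in Lj.
  exists (al (0, [::])); split; first exact: A2.
  by rewrite (Lp HT' mphi (A2 _ Hr) Li Lj) glca_T.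
Qed.
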